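(* There exist a path-connected topological space $Y$ and points $m,l\in Y$ such that, for the starting points $m$ (man) and $l$ (lion), the man has a strategy in $Y$ and the lion does not have a strategy in $Y$.
   Context: For a topological space $X$ and $x\in X$, let $P_x(X)$ be the set of continuous maps $\gamma:[0,+\infty)\to X$ with $\gamma(0)=x$. For $\gamma\in P_x(X)$ and $t\ge 0$, write $\gamma_{<t}=\gamma|_{[0,t)}$ and $\gamma_{\le t}=\gamma|_{[0,t]}$. Given starting points $m$ (man) and $l$ (lion) in $X$: a strategy for the man is a function $S:P_l(X)\to P_m(X)$ such that (i) $S(\beta)(t)\neq\beta(t)$ for all $\beta\in P_l(X)$ and $t\ge0$, and (ii) whenever $\beta,\beta'\in P_l(X)$ and $t\ge0$ satisfy $\beta_{<t}=\beta'_{<t}$, then $S(\beta)_{\le t}=S(\beta')_{\le t}$. A strategy for the lion is a function $S:P_m(X)\to P_l(X)$ such that (i) for each $\alpha\in P_m(X)$ there exists $t\ge 0$ with $S(\alpha)(t)=\alpha(t)$, and (ii) whenever $\alpha,\alpha'\in P_m(X)$ and $t\ge0$ satisfy $\alpha_{<t}=\alpha'_{<t}$, then $S(\alpha)_{\le t}=S(\alpha')_{\le t}$. The Axiom of Choice is assumed. *)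

(* Defs.v *)
From HB Require Import structures.
From mathcomp Require Import all_boot all_order all_algebra.
From mathcomp Require Import all_classical all_reals topology normedtype.
Set Implicit Arguments. Unset Strict Implicit. Unset Printing Implicit Defensive.
Import Order.TTheory GRing.Theory Num.Theory numFieldNormedType.Exports.
Local Open Scope ring_scope.
Local Open Scope classical_set_scope.

Definition path_connected_space (R : realType) (Y : topologicalType) : Prop :=
  forall x y : Y, exists f : R -> Y,
    {within [set x : R | 0 <= x <= 1], continuous f} /\ f 0 = x /\ f 1 = y.

(* P_x(X): continuous maps [0,+oo) -> X starting at x.  They are represented
   as total functions R -> X of which only the restriction to [0,+oo) matters. *)
Definition in_P (R : realType) (X : topologicalType) (x : X) (g : R -> X) : Prop :=
  {within [set s : R | 0 <= s], continuous g} /\ g 0 = x.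

Definition nonanticipating (R : realType) (X : topologicalType) (p : X)
  (S : (R -> X) -> (R -> X)) : Prop :=
  forall (b b' : R -> X) (t : R), in_P p b -> in_P p b' -> 0 <= t ->
    (forall s, 0 <= s -> s < t -> b s = b' s) ->
    forall s, 0 <= s -> s <= t -> S b s = S b' s.

Definition man_strategy (R : realType) (X : topologicalType) (m l : X)
  (S : (R -> X) -> (R -> X)) : Prop :=
  (forall b, in_P l b -> in_P m (S b)) /\
  (forall b, in_P l b -> forall t : R, 0 <= t -> S b t <> b t) /\
  nonanticipating l S.

Definition lion_strategy (R : realType) (X : topologicalType) (m l : X)
  (S : (R -> X) -> (R -> X)) : Prop :=
  (forall a, in_P m a -> in_P l (S a)) /\
  (forall a, in_P m a -> exists t : R, 0 <= t /\ S a t = a t) /\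
  nonanticipating m S.

Definition man_has_strategy (R : realType) (X : topologicalType) (m l : X) : Prop :=
  exists S : (R -> X) -> (R -> X), man_strategy m l S.

Definition lion_has_strategy (R : realType) (X : topologicalType) (m l : X) : Prop :=
  exists S : (R -> X) -> (R -> X), lion_strategy m l S.

(* Main.v *)
Require Import Defs.
From mathcomp Require Import all_boot all_order all_algebra.
From mathcomp Require Import all_classical all_reals topology normedtype.
From HB Require Import structures.
From mathcomp Require Import lra.
Set Implicit Arguments. Unset Strict Implicit. Unset Printing Implicit Defensive.
Import Order.TTheory GRing.Theory Num.Theory numFieldNormedType.Exports.
Local Open Scope ring_scope.
Local Open Scope classical_set_scope.

Record pt (R : realType) := MkP { px : R ; ph : R -> bool }.
HB.instance Definition _ (R : realType) := gen_eqMixin (pt R).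
HB.instance Definition _ (R : realType) := gen_choiceMixin (pt R).

Definition agr (R : realType) (s t : R -> bool) (u : R) :=
  forall v, 0 <= v -> v < u -> s v = t v.

Definition Nb (R : realType) (e : R) (p q : pt R) :=
  (exists u, [/\ u <= px p, u <= px q, agr (ph p) (ph q) u & px p + px q - 2 * u < e])
  /\ (0 < px p -> px p <= px q -> agr (ph p) (ph q) (px p) -> ph p (px p) = ph q (px p)).

Definition opn (R : realType) (A : set (pt R)) :=
  forall p, A p -> exists2 e, 0 < e & Nb e p `<=` A.

Lemma Nb_mono (R : realType) (e e' : R) p : e <= e' -> Nb e p `<=` Nb e' p.
Proof.
move=> ee' q [[u [h1 h2 h3 h4]] h5]; split=> //; exists u; split=> //.
by apply: lt_le_trans ee'.
Qed.

Lemma opT (R : realType) : opn (@setT (pt R)).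
Proof. by move=> p _; exists 1. Qed.

Lemma opI (R : realType) : setI_closed (@opn R).
Proof.
move=> A B oA oB p [Ap Bp].
have [e e0 eA] := oA p Ap; have [d d0 dB] := oB p Bp.
exists (Num.min e d); first by rewrite lt_min e0 d0.
move=> q Nq; split.
  by apply: eA; apply: Nb_mono Nq; rewrite ge_min lexx.
by apply: dB; apply: Nb_mono Nq; rewrite ge_min lexx orbT.
Qed.

Lemma op_bigU (R : realType) (I : Type) (f : I -> set (pt R)) :
  (forall i, opn (f i)) -> opn (\bigcup_i f i).
Proof.
move=> H p [i _ fip]; have [e e0 ef] := H i p fip.
by exists e => // q /ef fq; exists i.
Qed.

HB.instance Definition _ (R : realType) :=
  isOpenTopological.Build (pt R) (@opT R) (@opI R) (@op_bigU R).



Section S.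
Variable R : realType.
Implicit Types (p q r : pt R).

Lemma Nb_open e p q : Nb e p q -> exists2 d, 0 < d & Nb d q `<=` Nb e p.
Proof.
case: p q => x s [y t] [[u [/= ux uy ag hd]] Ep] /=.
set d1 := (e - (x + y - 2 * u)) / 2.
have d1p : 0 < d1 by rewrite /d1; lra.
have main : forall d, 0 < d -> d <= d1 ->
  (forall z (r : R -> bool) v, v <= y -> v <= z -> agr t r v -> y + z - 2 * v < d ->
     (0 < y -> y <= z -> agr t r y -> t y = r y) ->
     0 < x -> x <= z -> agr s r x -> s x = r x) ->
  Nb d (MkP y t) `<=` Nb e (MkP x s).
  move=> d d0 dd1 HE [z r] [[v [/= vy vz ag2 hd2]] E2] /=; split; last first.
    by move=> /= x0 xz agr1; apply: (HE z r v).
  exists (Num.min u v); split => /=.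
  - by rewrite ge_min ux.
  - by rewrite ge_min vz orbT.
  - move=> w w0; rewrite lt_min => /andP[wu wv].
    by rewrite (ag w w0 wu) (ag2 w w0 wv).
  - have [uv|vu] := leP u v.
      by rewrite /d1 in dd1; lra.
    by rewrite /d1 in dd1; lra.
have [yx|xy|xy] := ltgtP y x.
- exists (Num.min d1 (x - y)); first by rewrite lt_min d1p subr_gt0 yx.
  apply: main; first by rewrite lt_min d1p subr_gt0 yx.
    by rewrite ge_min lexx.
  move=> z r v vy vz _ h _; have : Num.min d1 (x - y) <= x - y by rewrite ge_min lexx orbT.
  move=> hm _ xz _; lra.
- exists (Num.min d1 (y - x)); first by rewrite lt_min d1p subr_gt0 xy.
  apply: main; first by rewrite lt_min d1p subr_gt0 xy.
    by rewrite ge_min lexx.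
  move=> z r v vy vz ag2 h _ x0 xz agr1.
  have hm : Num.min d1 (y - x) <= y - x by rewrite ge_min lexx orbT.
  have xv : x < v by lra.
  have tr : t x = r x by apply: ag2; lra.
  rewrite -tr; apply: Ep => //; first lra.
  move=> w w0 wx; rewrite (agr1 w w0 wx) (ag2 w w0) //; lra.
- subst y; have [ag3|nag] := pselect (agr s t x).
    exists d1 => //; apply: main => // z r v vy vz ag2 h E2 x0 xz agr1.
    have -> : s x = t x by apply: Ep.
    apply: E2 => // w w0 wx; by rewrite -(ag3 w w0 wx) (agr1 w w0 wx).
  have [c [c0 cx sc]] : exists c, [/\ 0 <= c, c < x & s c <> t c].
    apply: contrapT => H; apply: nag => w w0 wx.
    by apply: contrapT => sw; apply: H; exists w.
  exists (Num.min d1 (x - c)); first by rewrite lt_min d1p subr_gt0 cx.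
  apply: main; first by rewrite lt_min d1p subr_gt0 cx.
    by rewrite ge_min lexx.
  move=> z r v vy vz ag2 h _ x0 xz agr1.
  have hm : Num.min d1 (x - c) <= x - c by rewrite ge_min lexx orbT.
  have [cv|vc] := ltP c v.
    by exfalso; apply: sc; rewrite (agr1 c c0 cx) (ag2 c c0 cv).
  lra.
Qed.


Lemma Nb_self e p : 0 < e -> Nb e p p.
Proof.
move=> e0; split; last by [].
by exists (px p); split => //; rewrite -[X in X < _]/(px p + px p - 2 * px p); lra.
Qed.

Lemma nbhs_Nb e p : 0 < e -> nbhs p (Nb e p).
Proof.
move=> e0; exists (fun q => exists2 d, 0 < d & Nb d q `<=` Nb e p); split.
- move=> q [d d0 dq]; exists d => // r Nr.
  have [d' d'0 hd'] := Nb_open Nr.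
  exists d' => // w /hd' /dq //.
- by exists e.
- by move=> q [d d0 /(_ q (Nb_self q d0))].
Qed.

Lemma nbhs_Nb_ex p (A : set (pt R)) : nbhs p A -> exists2 e, 0 < e & Nb e p `<=` A.
Proof.
move=> [B [oB Bp BA]]; have [e e0 eB] := oB p Bp.
by exists e => // q /eB /BA.
Qed.

Lemma cont_by_Nb (f : R -> pt R) :
  (forall t e, 0 < e -> exists2 d, 0 < d & forall s, `|t - s| < d -> Nb e (f t) (f s)) ->
  continuous f.
Proof.
move=> H t U /= /nbhs_Nb_ex [e e0 eU].
have [d d0 hd] := H t e e0.
apply/nbhs_ballP; exists d => // s /= bs; apply: eU; apply: hd.
by move: bs; rewrite /ball /=.
Qed.

Lemma within_ev (T : topologicalType) (A : set R) (f : R -> T) t (U : set T) :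
  {within A, continuous f} -> A t -> nbhs (f t) U ->
  exists2 d, 0 < d & forall s, A s -> `|t - s| < d -> U (f s).
Proof.
move=> H At hU; have := H t U hU.
move=> /=; rewrite /nbhs /= -(nbhs_subspace_in At).
move=> /nbhs_ballP [d d0 hd].
by exists d => // s As ts; apply: hd => //; rewrite /ball /=.
Qed.

End S.


Section S3.
Variable R : realType.
Implicit Types (p q r : pt R).

Lemma Nb_intro e p q : px p - px q < e -> px q - px p < e ->
  agr (ph p) (ph q) (Num.min (px p) (px q)) ->
  (0 < px p -> px p <= px q -> agr (ph p) (ph q) (px p) -> ph p (px p) = ph q (px p)) ->
  Nb e p q.
Proof.
move=> h1 h2 ag E; split=> //; exists (Num.min (px p) (px q)); split=> //.
- by rewrite ge_min lexx.
- by rewrite ge_min lexx orbT.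
- by have [h|h] := leP (px p) (px q); lra.
Qed.

Lemma Nb_px e p q : Nb e p q -> px p - px q < e /\ px q - px p < e.
Proof. by move=> [[u [h1 h2 _ h4]] _]; split; lra. Qed.

Lemma Nb_same e p q : ph p = ph q -> px p - px q < e -> px q - px p < e -> Nb e p q.
Proof. by move=> E h1 h2; apply: Nb_intro => //; rewrite E. Qed.

Lemma Nb_neg e p q : px p < 0 -> px q < 0 -> px p - px q < e -> px q - px p < e -> Nb e p q.
Proof.
move=> n1 n2 h1 h2; apply: Nb_intro => //; last by move=> ?; lra.
move=> v v0; have [h|h] := leP (px p) (px q); lra.
Qed.

Lemma wcont_by_Nb (A : set R) (f : R -> pt R) :
  (forall t, A t -> forall e, 0 < e -> exists2 d, 0 < d &
     forall s, A s -> `|t - s| < d -> Nb e (f t) (f s)) ->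
  {within A, continuous f}.
Proof.
move=> H; rewrite continuous_subspace_in => t; rewrite inE => At U /= /nbhs_Nb_ex [e e0 eU].
have [d d0 hd] := H t At e e0.
rewrite /nbhs /= -(nbhs_subspace_in At).
apply/nbhs_ballP; exists d => // s /= bs As; apply: eU; apply: hd => //.
Qed.

Lemma px_wcont (A : set R) (b : R -> pt R) t : {within A, continuous b} -> A t ->
  forall e, 0 < e -> exists2 d, 0 < d & forall s, A s -> `|t - s| < d ->
    px (b t) - px (b s) < e /\ px (b s) - px (b t) < e.
Proof.
move=> bc At e e0; have [d d0 hd] := within_ev bc At (nbhs_Nb (b t) e0).
by exists d => // s As ts; apply: Nb_px; apply: hd.
Qed.

Lemma realc_ev (g : R -> R) : continuous g -> forall t e, 0 < e ->
  exists2 d, 0 < d & forall s, `|t - s| < d -> g t - g s < e /\ g s - g t < e.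
Proof.
move=> gc t e e0.
have := @within_ev R _ setT g t (ball (g t) e) (continuous_subspaceT (A:=setT) gc) I (nbhsx_ballx _ _ e0).
move=> [d d0 hd]; exists d => // s ts; have := hd s I ts.
rewrite /ball /= ltr_norml => /andP[]; lra.
Qed.

Definition f0 : R -> bool := fun _ => false.
Definition mm := MkP 1 f0.
Definition ll := MkP 0 f0.
Definition Man (b : R -> pt R) : R -> pt R := fun t => MkP (px (b t) + 1) f0.

Lemma man_ok : man_strategy mm ll Man.
Proof.
split; [|split].
- move=> b [bc b0]; split; last by rewrite /Man b0 /= add0r.
  apply: wcont_by_Nb => t At e e0.
  have [d d0 hd] := px_wcont bc At e0.
  exists d => // s As ts; have [h1 h2] := hd s As ts.
  apply: Nb_same => //=; lra.
- by move=> b _ t _ /(congr1 (@px R)) /=; lra.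
- move=> b b' t [bc b0] [bc' b0'] t0 ag s s0 st; rewrite /Man; congr MkP; congr (_ + _).
  have [lt|ge] := ltP s t; first by rewrite ag.
  have st' : s = t by apply/eqP; rewrite eq_le st ge.
  subst s; have [tz|tp] := eqVneq t 0; first by rewrite tz b0 b0'.
  have tpos : 0 < t by rewrite lt_neqAle eq_sym tp t0.
  apply: contrapT => neq.
  have : (px (b t) : R) != px (b' t) by apply/eqP.
  rewrite neq_lt => /orP[h|h].
  + have e0 : 0 < (px (b' t) - px (b t)) / 2 by lra.
    have [d1 d10 h1] := px_wcont bc t0 e0.
    have [d2 d20 h2] := px_wcont bc' t0 e0.
    set m := Num.min (Num.min d1 d2) t.
    have m0 : 0 < m by rewrite !lt_min d10 d20 tpos.
    have m1 : m <= d1 by rewrite /m !ge_min lexx.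
    have m2 : m <= d2 by rewrite /m !ge_min lexx orbT.
    have m3 : m <= t by rewrite /m ge_min lexx orbT.
    have As : 0 <= t - m / 2 by lra.
    have [a1 a2] := h1 (t - m / 2) As ltac:(rewrite ltr_norml; apply/andP; split; lra).
    have [a3 a4] := h2 (t - m / 2) As ltac:(rewrite ltr_norml; apply/andP; split; lra).
    have bb : b (t - m / 2) = b' (t - m / 2) by apply: ag; lra.
    have pe : px (b (t - m / 2)) = px (b' (t - m / 2)) by rewrite bb.
    clear bb; clear -a1 a2 a3 a4 pe h; lra.
  + have e0 : 0 < (px (b t) - px (b' t)) / 2 by lra.
    have [d1 d10 h1] := px_wcont bc t0 e0.
    have [d2 d20 h2] := px_wcont bc' t0 e0.
    set m := Num.min (Num.min d1 d2) t.
    have m0 : 0 < m by rewrite !lt_min d10 d20 tpos.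
    have m1 : m <= d1 by rewrite /m !ge_min lexx.
    have m2 : m <= d2 by rewrite /m !ge_min lexx orbT.
    have m3 : m <= t by rewrite /m ge_min lexx orbT.
    have As : 0 <= t - m / 2 by lra.
    have [a1 a2] := h1 (t - m / 2) As ltac:(rewrite ltr_norml; apply/andP; split; lra).
    have [a3 a4] := h2 (t - m / 2) As ltac:(rewrite ltr_norml; apply/andP; split; lra).
    have bb : b (t - m / 2) = b' (t - m / 2) by apply: ag; lra.
    have pe : px (b (t - m / 2)) = px (b' (t - m / 2)) by rewrite bb.
    clear bb; clear -a1 a2 a3 a4 pe h; lra.
Qed.

Lemma gcont (x y K : R) : continuous (fun t : R => x + t * (y - x) - K * (t * (1 - t))).
Proof.
move=> t.
have h1 : {for t, continuous (fun t : R => t)} by [].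
have hc : forall c : R, {for t, continuous (fun _ : R => c)} by move=> c; exact: cst_continuous.
have := continuousB (continuousD (hc x) (continuousM h1 (hc (y - x))))
  (continuousM (hc K) (continuousM h1 (continuousB (hc 1) h1))).
by [].
Qed.

Lemma pc : path_connected_space R (pt R).
Proof.
move=> [x hs] [y ht].
pose K := 4 * (x ^+ 2 + y ^+ 2 + 1).
pose g := fun u : R => x + u * (y - x) - K * (u * (1 - u)).
have gc : continuous g by exact: gcont.
have ghalf : g (1 / 2) < 0.
  have h1 := sqr_ge0 (x - 1 / 4); have h2 := sqr_ge0 (y - 1 / 4).
  rewrite /g /K; nra.
exists (fun u => MkP (g u) (if u < 1 / 2 then hs else ht)); split; [|split].
- apply: continuous_subspaceT; apply: cont_by_Nb => u e e0.
  have [dd dd0 hd] := realc_ev gc u e0.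
  case: (ltgtP u (1 / 2)) => hu.
  + exists (Num.min dd (1 / 2 - u)); first by rewrite lt_min dd0 /=; lra.
    move=> v; rewrite lt_min => /andP[/hd [h1 h2]].
    rewrite ltr_norml => /andP[h3 h4]; apply: Nb_same => //=.
    by rewrite ifT //; lra.
  + exists (Num.min dd (u - 1 / 2)); first by rewrite lt_min dd0 /=; lra.
    move=> v; rewrite lt_min => /andP[/hd [h1 h2]].
    rewrite ltr_norml => /andP[h3 h4]; apply: Nb_same => //=.
    by rewrite ifF //; apply/negbTE; rewrite -leNgt; lra.
  + subst u.
    have e1 : 0 < Num.min e (- g (1 / 2)) by rewrite lt_min e0 /=; lra.
    have [d3 d30 hd3] := realc_ev gc (1 / 2) e1.
    exists d3 => // v /hd3 [h1 h2].
    have m1 : Num.min e (- g (1 / 2)) <= e by rewrite ge_min lexx.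
    have m2 : Num.min e (- g (1 / 2)) <= - g (1/2) by rewrite ge_min lexx orbT.
    apply: Nb_neg => //=; lra.
- rewrite ifT; last lra.
  by have -> : g 0 = x by rewrite /g; lra.
- rewrite ifF; last by apply/negbTE; rewrite -leNgt; lra.
  by have -> : g 1 = y by rewrite /g; lra.
Qed.

End S3.


Section S4.
Variable R : realType.

Definition trunc (x : R) (sg : R -> bool) : R -> bool :=
  fun v => if v <= x then sg v else false.
Definition aP (sg : R -> bool) : R -> pt R := fun t => MkP (1 + t) (trunc (1 + t) sg).
Definition okS (sg : R -> bool) := forall v : R, v <= 1 -> sg v = false.

Lemma aP_cont sg : continuous (aP sg).
Proof.
apply: cont_by_Nb => t e e0; exists e => // s; rewrite ltr_norml => /andP[h1 h2].
apply: Nb_intro => /=; [lra|lra| |].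
- move=> v v0; rewrite lt_min => /andP[h3 h4]; rewrite /trunc !ifT //; lra.
- by move=> _ ts _; rewrite /trunc !ifT //; lra.
Qed.

Lemma aP_inP sg : okS sg -> in_P (mm R) (aP sg).
Proof.
move=> ok; split; first by apply: continuous_subspaceT; exact: aP_cont.
rewrite /aP /mm addr0; congr MkP; apply/funext => v; rewrite /trunc /f0.
by case: ifP => // /ok.
Qed.

Lemma aP_eq sg1 sg2 s : (forall v, v <= 1 + s -> sg1 v = sg2 v) -> aP sg1 s = aP sg2 s.
Proof.
move=> h; rewrite /aP; congr MkP; apply/funext => v; rewrite /trunc.
by case: ifP => // /h.
Qed.

Variable L : (R -> pt R) -> R -> pt R.
Hypothesis HL : lion_strategy (mm R) (ll R) L.

Lemma L_eq sg1 sg2 t : okS sg1 -> okS sg2 -> 0 <= t ->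
  (forall v, v < 1 + t -> sg1 v = sg2 v) -> L (aP sg1) t = L (aP sg2) t.
Proof.
move=> o1 o2 t0 h; case: HL => _ [_ NA].
apply: (NA _ _ t (aP_inP o1) (aP_inP o2) t0) => //.
move=> s s0 st; apply: aP_eq => v vs; apply: h; lra.
Qed.


Definition good (c : R * (R -> bool)) :=
  [/\ 0 <= c.1, okS c.2, (forall v, 1 + c.1 <= v -> c.2 v = false) &
      (forall s, 0 <= s -> s < c.1 -> L (aP c.2) s <> aP c.2 s)].
Definition G := {c : R * (R -> bool) | good c}.
Definition leP0 (a b : G) := (sval a).1 <= (sval b).1 /\
  (forall v, v < 1 + (sval a).1 -> (sval a).2 v = (sval b).2 v).
Definition leG : rel G := fun a b => `[< leP0 a b >].

Lemma leG_refl (a : G) : leG a a.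
Proof. by apply/asboolP; split. Qed.

Lemma leG_trans (a b c : G) : leG a b -> leG b c -> leG a c.
Proof.
move=> /asboolP [h1 h2] /asboolP [h3 h4]; apply/asboolP; split; first exact: le_trans h3.
move=> v hv; rewrite h2 // h4 //; apply: lt_le_trans hv _; rewrite lerD2l //.
Qed.

Lemma leG_anti (a b : G) : leG a b -> leG b a -> a = b.
Proof.
case: a => [[Ta sa] ga]; case: b => [[Tb sb] gb].
move=> /asboolP [/= h1 h2] /asboolP [/= h3 h4].
have eT : Ta = Tb by apply/eqP; rewrite eq_le h1 h3.
subst Tb.
have es : sa = sb.
  apply/funext => v; case: (ltP v (1 + Ta)) => hv; first exact: h2.
  by case: ga => _ _ /= fa _; case: gb => _ _ /= fb _; rewrite fa ?fb.
subst sb; congr exist; exact: Prop_irrelevance.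
Qed.

Lemma chain_ub (A : set G) : total_on A leG -> exists t, forall s, A s -> leG s t.
Proof.
move=> tot.
have g0good : good (0, @f0 R).
  split => /=; [by [] | by [] | by [] |].
  by move=> s s0 s1; exfalso; move: s0 s1; clear; lra.
have [[a0 Aa0]|A0] := pselect (A !=set0); last first.
  by exists (exist _ _ g0good) => s As; exfalso; apply: A0; exists s.
pose sg := fun v => match pselect (exists a : G, A a /\ v < 1 + (sval a).1) with
  | left H => (sval (projT1 (cid H))).2 v | right _ => false end.
have compat : forall a v, A a -> v < 1 + (sval a).1 -> sg v = (sval a).2 v.
  move=> a v Aa va; rewrite /sg; case: pselect => [H|N]; last by exfalso; apply: N; exists a.
  case: (cid H) => a' [Aa' va'] /=.
  by case: (tot a a' Aa Aa') => /asboolP [_ h]; rewrite h.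
have okg : okS sg.
  move=> v v1; rewrite /sg; case: pselect => // H; case: (cid H) => a' [Aa' _] /=.
  by case: (svalP a') => _ ok _ _; exact: ok.
have nocatch : forall s, 0 <= s -> (exists a, A a /\ s < (sval a).1) ->
    L (aP sg) s <> aP sg s.
  move=> s s0 [a [Aa sa]].
  case: (svalP a) => _ oka _ gca.
  have e1 : L (aP sg) s = L (aP (sval a).2) s.
    apply: L_eq => // v hv; apply: compat => //; move: hv sa; clear; lra.
  have e2 : aP sg s = aP (sval a).2 s.
    apply: aP_eq => v hv; apply: compat => //; move: hv sa; clear; lra.
  by rewrite e1 e2; apply: gca.
pose E := [set r | exists a, A a /\ (sval a).1 = r].
have [ub|nub] := pselect (has_ubound E).
- have hs : has_sup E by split => //; exists (sval a0).1; exists a0.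
  have inE' : forall a, A a -> (sval a).1 <= sup E.
    by move=> a Aa; apply: (sup_upper_bound hs); exists a.
  have T0 : 0 <= sup E.
    by apply: le_trans (inE' a0 Aa0); case: (svalP a0).
  have gd : good (sup E, sg).
    split => //=.
    - move=> v hv; rewrite /sg; case: pselect => // H; exfalso.
      have [a' [Aa' va']] := H; have := inE' a' Aa'; move: hv va'; clear; lra.
    - move=> s s0 sT; apply: nocatch => //.
      have ep : 0 < sup E - s by move: sT; clear; lra.
      have [r [a [Aa <-]] hr] := sup_adherent ep hs.
      by exists a; split => //; move: hr; clear; lra.
  exists (exist _ _ gd) => a Aa; apply/asboolP; split => /=; first exact: inE'.
  by move=> v hv; rewrite (compat a v Aa hv).
- exfalso.
  have allb : forall s, exists a, A a /\ s < (sval a).1.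
    move=> s; apply: contrapT => N; apply: nub; exists s => r [a [Aa <-]].
    rewrite leNgt; apply/negP => h; apply: N; exists a; split => //.
  case: HL => _ [catch _]; have [t [t0 ct]] := catch _ (aP_inP okg).
  exact: (nocatch t t0 (allb t) ct).
Qed.

Lemma no_max (g : G) : (forall s, leG g s -> s = g) -> False.
Proof.
move=> gmax.
case: (svalP g) => T0 ok fb gc.
move: T0 ok fb gc; set T := (sval g).1; set sg := (sval g).2 => T0 ok fb gc.
pose b0 := L (aP sg) T.
pose c := if px b0 == 1 + T then ~~ ph b0 (1 + T) else false.
pose sg2 := fun v => if v < 1 + T then sg v else c.
have ag2 : forall v, v < 1 + T -> sg2 v = sg v by move=> v hv; rewrite /sg2 hv.
have b00 : L (aP sg) 0 = ll R by case: HL => H _; case: (H _ (aP_inP ok)).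
have ok2 : okS sg2.
  move=> v v1; rewrite /sg2; case: ifP => [_|/negbT]; first exact: ok.
  rewrite -leNgt => hv.
  have T00 : T = 0 by move: hv v1 T0; clear; lra.
  rewrite /c /b0 T00 b00 /= ifF //; apply/negbTE; apply/eqP.
  by rewrite addr0 => /eqP; rewrite eq_sym oner_eq0.
have LT : L (aP sg2) T = b0 by rewrite /b0; apply: L_eq => // v hv; exact: ag2.
have Lless : forall s, 0 <= s -> s < T -> L (aP sg2) s = L (aP sg) s /\ aP sg2 s = aP sg s.
  move=> s s0 sT; split.
    by apply: L_eq => // v hv; apply: ag2; move: hv sT; clear; lra.
  by apply: aP_eq => v hv; apply: ag2; move: hv sT; clear; lra.
have sg2T : sg2 (1 + T) = c by rewrite /sg2 ltxx.
have noT : L (aP sg2) T <> aP sg2 T.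
  rewrite LT => h.
  have hx : px b0 = 1 + T by rewrite h.
  have hp : ph b0 (1 + T) = c by rewrite h /= /trunc lexx sg2T.
  move: hp; rewrite /c hx eqxx; by case: (ph b0 (1 + T)).
have near : exists2 e, 0 < e & forall s, T <= s -> s < T + e -> ~ Nb e b0 (aP sg2 s).
  have [hx|hx] := eqVneq (px b0) (1 + T).
  - have [ag|nag] := pselect (agr (ph b0) sg2 (1 + T)).
    + exists 1 => // s Ts _ [_ E].
      have E1 : 0 < px b0 by rewrite hx; move: T0; clear; lra.
      have E2 : px b0 <= px (aP sg2 s) by rewrite hx /=; move: Ts; clear; lra.
      have E3 : agr (ph b0) (ph (aP sg2 s)) (px b0).
        rewrite hx => v v0 vT; rewrite /= /trunc ifT; first exact: ag.
        by move: vT Ts; clear; lra.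
      have := E E1 E2 E3; rewrite hx /= /trunc ifT; last by move: Ts; clear; lra.
      by rewrite sg2T /c hx eqxx; case: (ph b0 (1 + T)).
    + have [c0 [c00 c0T nc]] : exists c0, [/\ 0 <= c0, c0 < 1 + T & ph b0 c0 <> sg2 c0].
        apply: contrapT => H; apply: nag => w w0 wx.
        by apply: contrapT => sw; apply: H; exists w.
      exists (1 + T - c0); first by move: c0T; clear; lra.
      move=> s Ts _ [[u [u1 u2 agu du]] _]; move: u2 agu du => /= u2 agu du.
      have [cu|uc] := ltP c0 u.
        apply: nc; rewrite (agu c0 c00 cu) /= /trunc ifT //.
        by move: c0T Ts; clear; lra.
      by rewrite hx in du u1; move: du u1 uc Ts; clear; lra.
  - move: hx; rewrite neq_lt => /orP[h|h].
    + exists ((1 + T - px b0) / 2); first by move: h; clear; lra.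
      by move=> s Ts sT /Nb_px [h1 h2]; move: h1 h2 h Ts sT => /=; clear; lra.
    + exists ((px b0 - 1 - T) / 2); first by move: h; clear; lra.
      by move=> s Ts sT /Nb_px [h1 h2]; move: h1 h2 h Ts sT => /=; clear; lra.
have [e e0 he] := near.
case: HL => Hc _; have [bc _] := Hc _ (aP_inP ok2).
have [d d0 hd] := within_ev bc T0 (nbhs_Nb (L (aP sg2) T) e0).
rewrite LT in hd.
pose dl := Num.min d e.
have dl0 : 0 < dl by rewrite lt_min d0 e0.
have dl1 : dl <= d by rewrite ge_min lexx.
have dl2 : dl <= e by rewrite ge_min lexx orbT.
pose T' := T + dl / 2.
pose sg' := fun v => if v < 1 + T' then sg2 v else false.
have ag' : forall v, v < 1 + T' -> sg' v = sg2 v by move=> v hv; rewrite /sg' hv.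
have ok' : okS sg'.
  move=> v v1; rewrite ag'; first exact: ok2.
  by rewrite /T'; move: v1 T0 dl0; clear; lra.
have gd' : good (T', sg').
  split => /=.
  - by rewrite /T'; move: T0 dl0; clear; lra.
  - exact: ok'.
  - move=> v hv; rewrite /sg' ifF //; apply/negbTE; rewrite -leNgt //.
  - move=> s s0 sT'.
    have e1 : L (aP sg') s = L (aP sg2) s.
      by apply: L_eq => // v hv; apply: ag'; move: hv sT'; clear; lra.
    have e2 : aP sg' s = aP sg2 s.
      by apply: aP_eq => v hv; apply: ag'; move: hv sT'; clear; lra.
    rewrite e1 e2.
    have [sT|Ts] := ltP s T.
      by have [-> ->] := Lless s s0 sT; apply: gc.
    have [eq|neq] := eqVneq s T; first by rewrite eq.
    move=> h; apply: (he s Ts); first by rewrite /T' in sT'; move: sT' dl2 dl0; clear; lra.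
    rewrite -h; apply: hd => //.
    rewrite ltr_norml; apply/andP; split; rewrite /T' in sT'; move: sT' Ts dl1 d0; clear; lra.
pose g' : G := exist _ _ gd'.
have hle : leG g g'.
  apply/asboolP; split => /=.
    by rewrite /T'; move: dl0; clear; lra.
  move=> v hv; rewrite ag'; first by rewrite ag2.
  by rewrite /T'; move: hv dl0; clear; lra.
have := gmax g' hle => /(congr1 (fun x : G => (sval x).1)) /=.
by rewrite /T'; move: dl0; clear; lra.
Qed.

End S4.

Theorem mainTheorem7 (R : realType) :
  exists (Y : topologicalType) (m l : Y),
    path_connected_space R Y /\
    man_has_strategy R m l /\ ~ lion_has_strategy R m l.
Proof.
exists (pt R), (mm R), (ll R); split; first exact: pc.
split; first by exists (@Man R); exact: man_ok.
move=> [L HL].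
have [g gmax] := Zorn (@leG_refl R L) (@leG_trans R L) (@leG_anti R L) (@chain_ub R L HL).
exact: (no_max HL gmax).
Qed.
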